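(* Let $V$ be as in the setup below, $V^+=\{v\in V:(N^+\otimes\mathbb C_q)\cdot v=0\}$, $h\in\dot{\mathfrak h}$ and $a\in\operatorname{rad}f$. If there exists $v\in V^+$ with $(h\otimes t^a)\cdot v\neq0$, then $(h\otimes t^a)\cdot w\neq0$ for all nonzero $w\in V^+$.
   Context: Fix integers $n\ge2$, $d\ge2$. Let $q=(q_{ij})_{1\le i,j\le n}$ with $q_{ij}\in\mathbb C^\times$ roots of unity, $q_{ii}=1$, $q_{ij}=q_{ji}^{-1}$. The rational quantum torus $\mathbb C_q$ is generated by $t_1^{\pm1},\dots,t_n^{\pm1}$ with $t_it_i^{-1}=t_i^{-1}t_i=1$, $t_it_j=q_{ij}t_jt_i$; $t^a=t_1^{a_1}\cdots t_n^{a_n}$, $t^at^b=f(a,b)t^bt^a$ with $f(a,b)=\prod_{i,j}q_{ji}^{a_jb_i}$, $\operatorname{rad}f=\{a: f(a,b)=1\ \forall b\}$; $Z(\mathbb C_q)$ is spanned by $t^a$, $a\in\operatorname{rad}f$. $\tau(d,q)=\mathfrak{sl}_d(\mathbb C_q)$: $d\times d$ matrices over $\mathbb C_q$ with trace in $[\mathbb C_q,\mathbb C_q]$, commutator bracket. With $J\subset\mathbb C_q\otimes\mathbb C_q$ spanned by $x\otimes y+y\otimes x$, $xy\otimes z+yz\otimes x+zx\otimes y$, let $\langle t^a,t^b\rangle$ ($a+b\in\operatorname{rad}f$) be the image of $t^a\otimes t^b$ modulo $J$, $HC_1(\mathbb C_q)$ their span; $\tilde\tau(d,q)=\tau(d,q)\oplus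 HC_1(\mathbb C_q)$ with $HC_1$ central and $[X\otimes t^a,Y\otimes t^b]=(XY\otimes t^at^b-YX\otimes t^bt^a)+\mathrm{Tr}(XY)\langle t^a,t^b\rangle$ if $a+b\in\operatorname{rad}f$ (no last term otherwise); $\hat\tau(d,q)=\tilde\tau(d,q)\oplus D$, $D=\bigoplus_i\mathbb Cd_i$, $[d_i,d_j]=0$, $[d_i,X\otimes t^a]=a_iX\otimes t^a$, $[d_i,\langle t^a,t^b\rangle]=(a_i+b_i)\langle t^a,t^b\rangle$. $\dot{\mathfrak h}$ = trace-zero diagonal matrices. Integrable: direct sum of weight spaces for $\mathfrak h=\dot{\mathfrak h}\oplus\bigoplus\mathbb C\langle t_i,t_i^{-1}\rangle\oplus\bigoplus\mathbb Cd_i$ and each $x_\alpha\otimes t^m$ ($x_\alpha$ a root vector of $\mathfrak{sl}_d(\mathbb C)$) acts locally nilpotently. Setup: $V$ is an irreducible integrable $\hat\tau(d,q)$-module with finite-dimensional weight spaces on which $HC_1(\mathbb C_q)$ acts trivially, regarded as a module over $(\mathfrak{gl}_d(\mathbb C)\otimes\mathbb C_q)\oplus D$ via $\mathfrak{gl}_d(\mathbb C)\otimes\mathbb C_q=\mathfrak{sl}_d(\mathbb C_q)\oplus(I_d\otimes Z(\mathbb C_q))$ with $I_d\otimes Z(\mathbb C_q)$ acting by zero. $N^+$ = strictly upper triangular matrices. *)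

(* Defs.v *)
From HB Require Import structures.
From mathcomp Require Import all_boot all_order all_algebra.
From mathcomp Require Import complex reals.
Set Implicit Arguments. Unset Strict Implicit. Unset Printing Implicit Defensive.
Import Order.TTheory GRing.Theory Num.Theory.
Local Open Scope ring_scope.

Section QT.
Variables (C : fieldType) (n d : nat).

Definition mi (a : 'rV[int]_n) (i : 'I_n) : int := a ord0 i.

Definition qtorus_param (q : 'I_n -> 'I_n -> C) : Prop :=
  (forall i j, exists k : nat, (0 < k)%N /\ q i j ^+ k = 1) /\
  (forall i, q i i = 1) /\ (forall i j, q i j = (q j i)^-1).

(* t^a t^b = sigma(a,b) t^(a+b)  with t^a = t_1^{a_1} ... t_n^{a_n} *)
Definition qsigma (q : 'I_n -> 'I_n -> C) (a b : 'rV[int]_n) : C :=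
  \prod_(i < n) \prod_(j < n | (j < i)%N) q i j ^ (mi a i * mi b j).

(* t^a t^b = f(a,b) t^b t^a,  f(a,b) = prod_{i,j} q_ji^{a_j b_i} *)
Definition qf (q : 'I_n -> 'I_n -> C) (a b : 'rV[int]_n) : C :=
  \prod_(i < n) \prod_(j < n) q j i ^ (mi a j * mi b i).

Definition in_rad (q : 'I_n -> 'I_n -> C) (a : 'rV[int]_n) : Prop :=
  forall b, qf q a b = 1.

Definition in_hdot (h : 'M[C]_d) : Prop := is_diag_mx h /\ \tr h = 0.

Variable V : lmodType C.

(* An action of (gl_d(C) (x) C_q) (+) D on V:  rho X a  is the operator of
   X (x) t^a, dop i the operator of d_i.  Lie-module axioms written on the
   basis { X (x) t^a } (rho is linear in X), with I_d (x) Z(C_q) acting by 0. *)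
Definition glq_module (q : 'I_n -> 'I_n -> C)
    (rho : 'M[C]_d -> 'rV[int]_n -> V -> V) (dop : 'I_n -> V -> V) : Prop :=
  (forall X a c u w, rho X a (c *: u + w) = c *: rho X a u + rho X a w) /\
  (forall i c u w, dop i (c *: u + w) = c *: dop i u + dop i w) /\
  (forall X Y a c v, rho (c *: X + Y) a v = c *: rho X a v + rho Y a v) /\
  (forall X Y a b v,
      rho X a (rho Y b v) - rho Y b (rho X a v) =
      rho (qsigma q a b *: (X *m Y) - qsigma q b a *: (Y *m X)) (a + b) v) /\
  (forall i j v, dop i (dop j v) = dop j (dop i v)) /\
  (forall i X a v, dop i (rho X a v) - rho X a (dop i v)
                   = (mi a i)%:~R *: rho X a v) /\
  (forall a v, in_rad q a -> rho 1%:M a v = 0).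

Definition submodule (rho : 'M[C]_d -> 'rV[int]_n -> V -> V)
    (dop : 'I_n -> V -> V) (W : V -> Prop) : Prop :=
  W 0 /\ (forall c u w, W u -> W w -> W (c *: u + w)) /\
  (forall X a v, W v -> W (rho X a v)) /\ (forall i v, W v -> W (dop i v)).

Definition irreducible (rho : 'M[C]_d -> 'rV[int]_n -> V -> V)
    (dop : 'I_n -> V -> V) : Prop :=
  (exists v : V, v != 0) /\
  forall W, submodule rho dop W -> (forall v, W v -> v = 0) \/ (forall v, W v).

(* Weight space for the weight (lam on \dot h, del on D).  The central
   elements <t_i, t_i^{-1}> of h act by 0 since HC_1 acts trivially. *)
Definition weight_space (rho : 'M[C]_d -> 'rV[int]_n -> V -> V)
    (dop : 'I_n -> V -> V) (lam : 'M[C]_d -> C) (del : 'I_n -> C) (v : V)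
    : Prop :=
  (forall h, in_hdot h -> rho h 0 v = lam h *: v) /\
  (forall i, dop i v = del i *: v).

Definition is_weight_vector rho dop (v : V) : Prop :=
  exists lam del, weight_space rho dop lam del v.

Definition fin_dim_sub (W : V -> Prop) : Prop :=
  exists s : seq V, forall v, W v ->
    exists c : 'I_(size s) -> C, v = \sum_(k < size s) c k *: s`_k.

Definition integrable_fd (rho : 'M[C]_d -> 'rV[int]_n -> V -> V)
    (dop : 'I_n -> V -> V) : Prop :=
  (* V is the (necessarily direct) sum of its weight spaces *)
  (forall v : V, exists s : seq V,
      (forall w, w \in s -> is_weight_vector rho dop w) /\
      v = \sum_(w <- s) w) /\
  (forall lam del, fin_dim_sub (weight_space rho dop lam del)) /\
  (forall (i j : 'I_d) m v, i != j ->
      exists k : nat, iter k (rho (delta_mx i j) m) v = 0).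

Definition Vplus (rho : 'M[C]_d -> 'rV[int]_n -> V -> V) (v : V) : Prop :=
  forall (i j : 'I_d) m, (i < j)%N -> rho (delta_mx i j) m v = 0.

End QT.

(* Main.v *)
Require Import Defs.
From HB Require Import structures.
From mathcomp Require Import all_boot all_order all_algebra.
From mathcomp Require Import complex reals.
From mathcomp Require Import ring lra.
Import Order.TTheory GRing.Theory Num.Theory.
Local Open Scope ring_scope.

Set Implicit Arguments. Unset Strict Implicit. Unset Printing Implicit Defensive.

Definition myRe (R : realType) (x : R[i]) : R := match x with Complex a _ => a end.
Arguments myRe {R}.
Lemma myReD (R : realType) (x y : R[i]) : myRe (x + y) = myRe x + myRe y.
Proof. by case: x => a b; case: y => c e. Qed.
Lemma myReN (R : realType) (x : R[i]) : myRe (- x) = - myRe x.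
Proof. by case: x. Qed.
Lemma myRe_nat (R : realType) k : myRe (k%:R : R[i]) = k%:R.
Proof. elim: k => [//|k IH]; by rewrite !mulrS myReD IH. Qed.

Lemma diag_delta_l (C : pzRingType) (d : nat) (D : 'M[C]_d) (i j : 'I_d) :
  is_diag_mx D -> D *m delta_mx i j = D i i *: delta_mx i j.
Proof.
move=> /diag_mxP[r ->]; rewrite mul_diag_mx; apply/matrixP=> k l; rewrite !mxE.
by case: (eqVneq k i) => [->|ne] /=; rewrite ?eqxx ?mulr1n ?mulr0n ?mulr0 ?(negPf ne).
Qed.
Lemma diag_delta_r (C : comPzRingType) (d : nat) (D : 'M[C]_d) (i j : 'I_d) :
  is_diag_mx D -> delta_mx i j *m D = D j j *: delta_mx i j.
Proof.
move=> /diag_mxP[r ->]; rewrite mul_mx_diag; apply/matrixP=> k l; rewrite !mxE.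
by case: (eqVneq l j) => [->|ne] /=; rewrite ?eqxx ?(negPf ne) ?andbT ?andbF ?mul0r ?mulr0 // mulrC.
Qed.
Lemma delta_diag (C : pzRingType) (d : nat) (k : 'I_d) : is_diag_mx (delta_mx k k : 'M[C]_d).
Proof.
apply/is_diag_mxP => i j ne; rewrite mxE.
case: (eqVneq i k) => [ei|] //=; case: (eqVneq j k) => [ej|] //=.
by move: ne; rewrite ei ej eqxx.
Qed.

Section Main.
Variables (R : realType) (n d : nat) (q : 'I_n -> 'I_n -> R[i]) (V : lmodType R[i])
  (rho : 'M[R[i]]_d -> 'rV[int]_n -> V -> V) (dop : 'I_n -> V -> V).
Hypothesis hmod : glq_module q rho dop.
Local Notation C := R[i].

Lemma rho_lin X a c u w : rho X a (c *: u + w) = c *: rho X a u + rho X a w.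
Proof. by case: hmod. Qed.
Lemma dop_lin i c u w : dop i (c *: u + w) = c *: dop i u + dop i w.
Proof. by case: hmod => _ []. Qed.
Lemma rhoM_lin X Y a c v : rho (c *: X + Y) a v = c *: rho X a v + rho Y a v.
Proof. by case: hmod => _ [] _ []. Qed.
Lemma rho_comm X Y a b v : rho X a (rho Y b v) =
   rho Y b (rho X a v) + rho (qsigma q a b *: (X *m Y) - qsigma q b a *: (Y *m X)) (a + b) v.
Proof. by case: hmod => _ [] _ [] _ [] h4 _; rewrite -h4 addrCA subrr addr0. Qed.
Lemma dop_comm i X a v : rho X a (dop i v) = dop i (rho X a v) - (mi a i)%:~R *: rho X a v.
Proof. by case: hmod => _ [] _ [] _ [] _ [] _ [] h6 _; rewrite -h6 opprB addrCA subrr addr0. Qed.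

Lemma rho_v0 X a : rho X a 0 = 0.
Proof.
have H := rho_lin X a 1 0 0; rewrite !scale1r addr0 in H.
by apply: (addrI (rho X a 0)); rewrite addr0 -H.
Qed.
Lemma rho_Z X a c u : rho X a (c *: u) = c *: rho X a u.
Proof. by rewrite -[c *: u]addr0 rho_lin rho_v0 addr0. Qed.
Lemma rho_D X a u w : rho X a (u + w) = rho X a u + rho X a w.
Proof. by rewrite -{1}[u]scale1r rho_lin scale1r. Qed.
Lemma rho_N X a u : rho X a (- u) = - rho X a u.
Proof. by rewrite -scaleN1r rho_Z scaleN1r. Qed.
Lemma rho_B X a u w : rho X a (u - w) = rho X a u - rho X a w.
Proof. by rewrite rho_D rho_N. Qed.
Lemma dop_v0 i : dop i 0 = 0.
Proof.
have H := dop_lin i 1 0 0; rewrite !scale1r addr0 in H.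
by apply: (addrI (dop i 0)); rewrite addr0 -H.
Qed.
Lemma dop_Z i c u : dop i (c *: u) = c *: dop i u.
Proof. by rewrite -[c *: u]addr0 dop_lin dop_v0 addr0. Qed.
Lemma rhoM0 a v : rho 0 a v = 0.
Proof.
have H := rhoM_lin 0 0 a 1 v; rewrite !scale1r addr0 in H.
by apply: (addrI (rho 0 a v)); rewrite addr0 -H.
Qed.
Lemma rhoMZ c X a v : rho (c *: X) a v = c *: rho X a v.
Proof. by rewrite -[c *: X]addr0 rhoM_lin rhoM0 addr0. Qed.
Lemma rhoMD X Y a v : rho (X + Y) a v = rho X a v + rho Y a v.
Proof. by rewrite -{1}[X]scale1r rhoM_lin scale1r. Qed.

Lemma rhoDE (D : 'M[C]_d) i j s1 s2 c v : is_diag_mx D ->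
  rho (s1 *: (D *m delta_mx i j) - s2 *: (delta_mx i j *m D)) c v
  = (s1 * D i i - s2 * D j j) *: rho (delta_mx i j) c v.
Proof.
move=> dD; rewrite diag_delta_l // diag_delta_r // !scalerA -scalerBl rhoMZ //.
Qed.
Lemma rhoED (D : 'M[C]_d) i j s1 s2 c v : is_diag_mx D ->
  rho (s1 *: (delta_mx i j *m D) - s2 *: (D *m delta_mx i j)) c v
  = (s1 * D j j - s2 * D i i) *: rho (delta_mx i j) c v.
Proof.
move=> dD; rewrite diag_delta_l // diag_delta_r // !scalerA -scalerBl rhoMZ //.
Qed.

Lemma mi0 i : mi (0 : 'rV[int]_n) i = 0.
Proof. by rewrite /mi mxE. Qed.
Lemma qsig0l b : qsigma q 0 b = 1.
Proof.
rewrite /qsigma big1 // => i _; rewrite big1 // => j _.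
by rewrite mi0 mul0r expr0z.
Qed.
Lemma qsig0r b : qsigma q b 0 = 1.
Proof.
rewrite /qsigma big1 // => i _; rewrite big1 // => j _.
by rewrite mi0 mulr0 expr0z.
Qed.

Lemma qsig_sym a b : qtorus_param q -> in_rad q a -> qsigma q a b = qsigma q b a.
Proof.
move=> [hroot [hdiag hinv]] ha.
have nz : forall i j, q i j != 0.
  move=> i j; have [k [k0 hk]] := hroot i j; apply/eqP => e.
  by move: hk; rewrite e expr0n; case: k k0 => // k _ /eqP; rewrite eq_sym oner_eq0.
pose g (i j : 'I_n) : C := q i j ^ (mi a i * mi b j).
pose A (i j : 'I_n) : C := if (j < i)%N then g i j else 1.
pose B (i j : 'I_n) : C := if (i < j)%N then g i j else 1.
have E1 : qf q a b = \prod_(i < n) \prod_(j < n) (A i j * B i j).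
  rewrite /qf exchange_big; apply: eq_bigr => i _; apply: eq_bigr => j _.
  rewrite /A /B; case: ltngtP => // e.
    by rewrite mulr1.
    by rewrite mul1r.
  have -> : j = i by apply: val_inj.
  by rewrite mulr1 /g hdiag exp1rz.
have E2 : qsigma q a b * \prod_(i < n) \prod_(j < n) B i j = 1.
  transitivity (qf q a b); last exact: ha.
  rewrite E1.
  have -> : \prod_(i < n) \prod_(j < n) (A i j * B i j) =
     (\prod_(i < n) \prod_(j < n) A i j) * \prod_(i < n) \prod_(j < n) B i j.
    by rewrite -big_split; apply: eq_bigr => i _; rewrite big_split.
  congr (_ * _).
  by rewrite /qsigma; apply: eq_bigr => i _; rewrite big_mkcond.
have E3 : qsigma q b a * \prod_(i < n) \prod_(j < n) B i j = 1.
  have -> : qsigma q b a = \prod_(i < n) \prod_(j < n)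
      (if (i < j)%N then q j i ^ (mi b j * mi a i) else 1).
    rewrite /qsigma (eq_bigr (fun i : 'I_n => \prod_(j < n)
        (if (j < i)%N then q i j ^ (mi b i * mi a j) else 1))); last first.
      by move=> i _; rewrite big_mkcond.
    by rewrite exchange_big.
  rewrite -big_split big1 // => i _; rewrite -big_split big1 // => j _ /=.
  rewrite /B; case: ifP => _; last by rewrite mulr1.
  rewrite /g hinv -expfV mulrC [mi b j * _]mulrC divff //.
  by rewrite expfz_neq0.
by rewrite -[qsigma q a b]mulr1 -E3 mulrCA E2 mulr1.
Qed.

Definition c0 : C := (\sum_(l < d) (l%:R : C)) / d%:R.
Definition Hm : 'M[C]_d := diag_mx (\row_k (c0 - (k : nat)%:R)).
Lemma Hm_diag : is_diag_mx Hm.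
Proof. exact: diag_mx_is_diag. Qed.
Lemma HmE k : Hm k k = c0 - (k : nat)%:R.
Proof. by rewrite !mxE eqxx mulr1n. Qed.
Lemma Hm_hdot : (0 < d)%N -> in_hdot Hm.
Proof.
move=> d0; split; first exact: Hm_diag.
rewrite mxtrace_diag.
rewrite (eq_bigr (fun k : 'I_d => c0 - (k : nat)%:R)); last by move=> k _; rewrite mxE.
rewrite sumrB sumr_const card_ord -mulr_natr /c0 divfK ?subrr //.
by rewrite pnatr_eq0 -lt0n.
Qed.

Definition Ev (f : C) (z : V) := rho Hm 0 z = f *: z.

Fixpoint Sp (fs : seq C) (x : V) : Prop :=
  if fs is f :: fs' then exists z, Ev f z /\ Sp fs' (x - z) else x = 0.

Lemma Sp_lin fs gs c x y : Sp fs x -> Sp gs y -> Sp (fs ++ gs) (c *: x + y).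
Proof.
elim: fs x => [|f fs IH] x /= => [-> |[z [ez sz]]] sy; first by rewrite scaler0 add0r.
exists (c *: z); split.
  by rewrite /Ev rho_Z ez !scalerA mulrC.
have -> : c *: x + y - c *: z = c *: (x - z) + y.
  by rewrite scalerBr addrAC.
exact: IH.
Qed.

Lemma Sp_op (Op : V -> V) (g : C -> C) fs x :
  (forall c u w, Op (c *: u + w) = c *: Op u + Op w) ->
  (forall f z, Ev f z -> Ev (g f) (Op z)) ->
  Sp fs x -> Sp (map g fs) (Op x).
Proof.
move=> hlin hev.
have O0 : Op 0 = 0.
  have H := hlin 1 0 0; rewrite !scale1r addr0 in H.
  by apply: (addrI (Op 0)); rewrite addr0 -H.
have OB : forall u w, Op (u - w) = Op u - Op w.
  move=> u w.
  have ON : Op (- w) = - Op w.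
    by have := hlin (-1) w 0; rewrite addr0 O0 addr0 !scaleN1r.
  by have := hlin 1 u (- w); rewrite !scale1r ON.
elim: fs x => [|f fs IH] x /= => [-> // |[z [ez sz]]].
by exists (Op z); split; [exact: hev | rewrite -OB; exact: IH].
Qed.

Definition Ele (c : R) (x : V) :=
  exists fs, Sp fs x /\ all (fun f => myRe f <= c) fs.

Lemma Ele_lin c k x y : Ele c x -> Ele c y -> Ele c (k *: x + y).
Proof.
move=> [fs [sx ax]] [gs [sy ay]]; exists (fs ++ gs); split; first exact: Sp_lin.
by rewrite all_cat ax ay.
Qed.
Lemma Ele0 c : Ele c 0.
Proof. by exists [::]. Qed.
Lemma EleZ c k x : Ele c x -> Ele c (k *: x).
Proof. by move=> e; rewrite -[_ *: _]addr0; apply: Ele_lin => //; apply: Ele0. Qed.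
Lemma EleD c x y : Ele c x -> Ele c y -> Ele c (x + y).
Proof. by move=> e1 e2; rewrite -[x]scale1r; apply: Ele_lin. Qed.
Lemma Ele_mono c c' x : c <= c' -> Ele c x -> Ele c' x.
Proof.
move=> le [fs [s a]]; exists fs; split=> //.
by apply/allP => f fin; apply: le_trans le; move/allP: a; apply.
Qed.

Lemma Ev_delta f z i j b : Ev f z ->
  Ev (f + (Hm i i - Hm j j)) (rho (delta_mx i j) b z).
Proof.
rewrite /Ev => ez; rewrite rho_comm ez rho_Z add0r qsig0l qsig0r.
by rewrite (rhoDE _ _ _ _ _ _ Hm_diag) !mul1r -scalerDl.
Qed.
Lemma Ev_dop f z k : Ev f z -> Ev f (dop k z).
Proof.
by rewrite /Ev => ez; rewrite dop_comm mi0 scale0r subr0 ez dop_Z.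
Qed.

Lemma Ele_zop c x k b : Ele c x -> Ele c (rho (delta_mx k k) b x).
Proof.
move=> [fs [s a]]; exists (map id fs); split; last by rewrite map_id.
apply: (Sp_op (g := id)) s => [cc u w|f z ez]; first exact: rho_lin.
by have := Ev_delta k k b ez; rewrite subrr addr0.
Qed.
Lemma Ele_dop c x k : Ele c x -> Ele c (dop k x).
Proof.
move=> [fs [s a]]; exists (map id fs); split; last by rewrite map_id.
apply: (Sp_op (g := id)) s => [cc u w|f z ez]; first exact: dop_lin.
exact: Ev_dop.
Qed.
Lemma Ele_neg c x (i j : 'I_d) b : (j < i)%N -> Ele c x -> Ele (c - 1) (rho (delta_mx i j) b x).
Proof.
move=> ji [fs [s a]]; exists (map (fun f => f + (Hm i i - Hm j j)) fs); split.
  apply: Sp_op s => [cc u w|f z ez]; first exact: rho_lin.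
  exact: Ev_delta.
apply/allP => g /mapP [f fin ->].
have hf : myRe f <= c by move/allP: a; apply.
have -> : Hm i i - Hm j j = (j : nat)%:R - (i : nat)%:R by rewrite !HmE; ring.
rewrite myReD myReD myReN !myRe_nat.
have hij : (j : nat).+1%:R <= (i : nat)%:R :> R by rewrite ler_nat.
rewrite mulrS in hij; lra.
Qed.

Lemma Sp_sub f0 fs x : Sp fs x -> Sp fs (rho Hm 0 x - f0 *: x).
Proof.
move=> s; rewrite -[fs]map_id.
apply: (Sp_op (Op := fun x => rho Hm 0 x - f0 *: x)) s => [c u w|f z ez].
  by rewrite rho_lin scalerDr scalerBr !scalerA (mulrC f0) addrACA opprD.
by rewrite /Ev rho_B rho_Z ez rho_Z ez scalerBr !scalerA (mulrC f0).
Qed.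

Lemma Sp_eig f0 es x : Ev f0 x -> Sp es x -> f0 \notin es -> x = 0.
Proof.
elim: es x => [|e es IH] x ex //= [z [ez sz]].
rewrite inE negb_or => /andP [ne nin].
have : Sp es (rho Hm 0 x - e *: x).
  have -> : rho Hm 0 x - e *: x = rho Hm 0 (x - z) - e *: (x - z).
    by rewrite rho_B ez scalerBr opprB addrA subrK.
  exact: Sp_sub.
rewrite ex -scalerBl => s.
have : (f0 - e) *: x = 0.
  apply: IH => //; by rewrite /Ev rho_Z ex !scalerA mulrC.
move/eqP; rewrite scaler_eq0 subr_eq0 (negPf ne) /= => /eqP //.
Qed.

Lemma Sp_disj fs es x : Sp fs x -> Sp es x -> (forall f, f \in fs -> f \notin es) -> x = 0.
Proof.
elim: fs es x => [|f fs IH] es x /=; first by move=> ->.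
move=> [z [ez sz]] se hd.
have ex : Ev f x.
  apply/eqP; rewrite -subr_eq0; apply/eqP.
  apply: (IH es) => //.
  - have -> : rho Hm 0 x - f *: x = rho Hm 0 (x - z) - f *: (x - z).
      by rewrite rho_B ez scalerBr opprB addrA subrK.
    exact: Sp_sub.
  - exact: Sp_sub.
  - by move=> g gin; apply: hd; rewrite inE gin orbT.
by apply: (Sp_eig ex se); apply: hd; rewrite inE eqxx.
Qed.

(* PBW-like spanning sets *)
Inductive Z0 (u : V) : V -> Prop :=
| Z0u : Z0 u u
| Z0z : Z0 u 0
| Z0lin : forall c x y, Z0 u x -> Z0 u y -> Z0 u (c *: x + y)
| Z0d : forall k b x, Z0 u x -> Z0 u (rho (delta_mx k k) b x)
| Z0D : forall k x, Z0 u x -> Z0 u (dop k x).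

Inductive Sg (u : V) : V -> Prop :=
| Sz : forall x, Z0 u x -> Sg u x
| Sn : forall (i j : 'I_d) b x, (j < i)%N -> Sg u x -> Sg u (rho (delta_mx i j) b x)
| Slin : forall c x y, Sg u x -> Sg u y -> Sg u (c *: x + y).

Lemma Z0_plus u : Vplus rho u -> forall x, Z0 u x -> Vplus rho x.
Proof.
move=> hu x; elim=> {x} [//| |c x y _ IHx _ IHy|k b x _ IH|k x _ IH] i j m lij.
- exact: rho_v0.
- by rewrite rho_lin IHx // IHy // scaler0 addr0.
- rewrite rho_comm IH // rho_v0 add0r (rhoED _ _ _ _ _ _ (delta_diag _ k)).
  by rewrite IH // scaler0.
- by rewrite dop_comm IH // dop_v0 scaler0 subr0.
Qed.

Lemma Sg0 u : Sg u 0.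
Proof. by apply: Sz; apply: Z0z. Qed.
Lemma SgD u x y : Sg u x -> Sg u y -> Sg u (x + y).
Proof. by move=> a b; rewrite -[x]scale1r; apply: Slin. Qed.
Lemma SgZ u c x : Sg u x -> Sg u (c *: x).
Proof. by move=> a; rewrite -[_ *: _]addr0; apply: Slin => //; apply: Sg0. Qed.

Lemma Sg_sub u : Vplus rho u -> submodule rho dop (Sg u).
Proof.
move=> hu; split; first exact: Sg0.
split; first by move=> c x y; apply: Slin.
split.
  move=> X a x sx; elim: sx X a => {x} [x zx|i j b x ji _ IH|c x y _ IHx _ IHy] X a.
  - rewrite (matrix_sum_delta X).
    rewrite (big_morph (fun X => rho X a x) (fun X Y => rhoMD X Y a x) (rhoM0 a x)).
    apply: (big_ind (Sg u)); [exact: Sg0 | exact: SgD |] => i _.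
    rewrite (big_morph (fun X => rho X a x) (fun X Y => rhoMD X Y a x) (rhoM0 a x)).
    apply: (big_ind (Sg u)); [exact: Sg0 | exact: SgD |] => j _.
    rewrite rhoMZ; apply: SgZ.
    case: (ltngtP i j) => [lij|lji|eij].
    + by rewrite (Z0_plus hu zx) //; apply: Sg0.
    + by apply: Sn => //; apply: Sz.
    + have -> : j = i by apply: val_inj.
      by apply: Sz; apply: Z0d.
  - rewrite rho_comm; apply: SgD; first by apply: Sn => //; apply: IH.
    exact: IH.
  - by rewrite rho_lin; apply: Slin.
move=> k x; elim=> {x} [x zx|i j b x ji sx IH|c x y _ IHx _ IHy].
- by apply: Sz; apply: Z0D.
- have -> : dop k (rho (delta_mx i j) b x) =
     rho (delta_mx i j) b (dop k x) + (mi b k)%:~R *: rho (delta_mx i j) b x.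
    by rewrite dop_comm subrK.
  by apply: SgD; [apply: Sn | apply: SgZ; apply: Sn].
- by rewrite dop_lin; apply: Slin.
Qed.

Lemma Sg_Ele u c : Ele c u -> forall x, Sg u x -> Ele c x.
Proof.
move=> eu.
have hz : forall x, Z0 u x -> Ele c x.
  move=> x; elim=> {x} [//| |c' x y _ IHx _ IHy|k b x _ IH|k x _ IH].
  - exact: Ele0.
  - exact: Ele_lin.
  - exact: Ele_zop.
  - exact: Ele_dop.
move=> x; elim=> {x} [x zx|i j b x ji _ IH|c' x y _ IHx _ IHy].
- exact: hz.
- by apply: (Ele_mono (c := c - 1)); [lra | apply: Ele_neg].
- exact: Ele_lin.
Qed.

Section T.
Variables (hq : qtorus_param q) (h : 'M[C]_d) (hh : in_hdot h)
  (a : 'rV[int]_n) (ha : in_rad q a).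

Lemma T_Sg w c : Ele c w -> rho h a w = 0 ->
  forall x, Sg w x -> Ele c x /\ Ele (c - 1) (rho h a x).
Proof.
move=> ew tw.
have hd := hh.1.
have hz : forall x, Z0 w x -> Ele c x /\ rho h a x = 0.
  move=> x; elim=> {x} [//| |c' x y _ [IHx Tx] _ [IHy Ty]|k b x _ [IH Tx]|k x _ [IH Tx]].
  - by split; [apply: Ele0 | apply: rho_v0].
  - by split; [apply: Ele_lin | rewrite rho_lin Tx Ty scaler0 addr0].
  - split; first exact: Ele_zop.
    rewrite rho_comm Tx rho_v0 add0r (rhoDE _ _ _ _ _ _ hd) (qsig_sym b hq ha).
    by rewrite subrr scale0r.
  - split; first exact: Ele_dop.
    by rewrite dop_comm Tx dop_v0 scaler0 subr0.
move=> x; elim=> {x} [x zx|i j b x ji _ [IH TIH]|c' x y _ [IHx Tx] _ [IHy Ty]].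
- by have [e ->] := hz x zx; split => //; apply: Ele0.
- split; first by apply: (Ele_mono (c := c - 1)); [lra | apply: Ele_neg].
  rewrite rho_comm (rhoDE _ _ _ _ _ _ hd) [X in Ele _ X]addrC.
  apply: Ele_lin; first exact: Ele_neg.
  by apply: (Ele_mono (c := c - 1 - 1)); [lra | apply: Ele_neg].
- by split; [apply: Ele_lin | rewrite rho_lin; apply: Ele_lin].
Qed.

Lemma T_plus v : Vplus rho v -> Vplus rho (rho h a v).
Proof.
move=> pv i j m lij; rewrite rho_comm pv // rho_v0 add0r.
by rewrite (rhoED _ _ _ _ _ _ hh.1) pv // scaler0.
Qed.

Lemma step w v c : irreducible rho dop -> Vplus rho w -> w != 0 -> rho h a w = 0 ->
  Vplus rho v -> rho h a v != 0 -> Ele c w -> Ele (c - 1) w.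
Proof.
move=> [_ hirr] pw nw tw pv tv ew.
have sv : Sg w v.
  case: (hirr _ (Sg_sub pw)) => [H|]; last by apply.
  by move: nw; rewrite (H w) ?eqxx //; apply: Sz; apply: Z0u.
have eu := (T_Sg ew tw sv).2.
have sw : Sg (rho h a v) w.
  case: (hirr _ (Sg_sub (T_plus pv))) => [H|]; last by apply.
  by move: tv; rewrite (H (rho h a v)) ?eqxx //; apply: Sz; apply: Z0u.
exact: (Sg_Ele eu sw).
Qed.
End T.

End Main.

Lemma bound_seq (R : realType) (g : R[i] -> R) (l : seq R[i]) :
  exists c, all (fun f => g f <= c) l.
Proof.
elim: l => [|x l [c hc]]; first by exists 0.
exists (Num.max (g x) c); rewrite /= le_max lexx /=.
apply/allP => f fin; rewrite le_max; apply/orP; right.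
by move/allP: hc; apply.
Qed.

Unset Implicit Arguments.

Theorem lemma5p12 (R : realType) (n d : nat) (hn : (2 <= n)%N) (hd : (2 <= d)%N)
    (q : 'I_n -> 'I_n -> R[i]) (hq : qtorus_param q)
    (V : lmodType R[i])
    (rho : 'M[R[i]]_d -> 'rV[int]_n -> V -> V) (dop : 'I_n -> V -> V)
    (hmod : glq_module q rho dop)
    (hirr : irreducible rho dop)
    (hint : integrable_fd rho dop)
    (h : 'M[R[i]]_d) (hh : in_hdot h)
    (a : 'rV[int]_n) (ha : in_rad q a) :
  (exists v, Vplus rho v /\ rho h a v != 0) ->
  forall w : V, Vplus rho w -> w != 0 -> rho h a w != 0.
Proof.
move=> [v [pv tv]] w pw nw; apply/negP => /eqP tw.
have d0 : (0 < d)%N := ltn_trans (ltnSn 0) hd.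
have hH := Hm_hdot R d0.
have [ys sy] : exists ys, Sp rho ys w.
  have [s [hs ->]] := hint.1 w.
  elim: s hs => [|x s IH] hs; first by exists [::]; rewrite big_nil.
  have [lam [del [wl _]]] := hs x (mem_head _ _).
  have [ys sy] := IH (fun y yin => hs y ltac:(by rewrite inE yin orbT)).
  exists (lam (Hm R d) :: ys); rewrite big_cons /=; exists x; split; first exact: (wl _ hH).
  by rewrite addrC addKr.
have [c hc] := bound_seq myRe ys.
have [M hM] := bound_seq (fun f => - myRe f) ys.
have ek : forall k : nat, Ele rho (c - k%:R) w.
  elim=> [|k IH]; first by rewrite subr0; exists ys.
  have -> : c - k.+1%:R = c - k%:R - 1 by rewrite mulrS; ring.
  exact: (step hmod hq hh ha hirr pw nw tw pv tv IH).
have [es [se ae]] := ek (Num.Def.archi_bound `|c + M|).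
have hk := archi_boundP (normr_ge0 (c + M)).
have hcm := ler_norm (c + M).
suff : w = 0 by move/eqP: nw.
apply: (Sp_disj hmod sy se) => f fin; apply/negP => fes.
have h1 : myRe f <= c - (Num.Def.archi_bound `|c + M|)%:R by move/allP: ae; apply.
have h2 : - myRe f <= M by move/allP: hM; apply.
move: h1 h2 hk hcm; clear; move=> h1 h2 hk hcm; lra.
Qed.
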